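(* Let $H$ be a separable infinite-dimensional complex Hilbert space, $\ell^2=\ell^2(\mathbb{Z}_+)$, and $\mathcal{H}=\ell^2(\mathbb{Z}_+,H)=(\bigoplus_{n\in\mathbb{Z}_+}H)_{\ell^2}$. Let $B$ be the backward shift on $\ell^2$, $B(x_0,x_1,\dots)=(x_1,x_2,\dots)$, and $B_\infty$ the backward shift on $\mathcal{H}$, $B_\infty(x_0,x_1,\dots)=(x_1,x_2,\dots)$ with $x_n\in H$; $B^*$ and $B_\infty^*$ are their adjoints (the forward shifts). Then: (i) $L_B$ and $R_{B^*}$ are universal operators on $\mathcal{C}_2(\ell^2)$, and $L_{B_\infty}$ and $R_{B_\infty^*}$ are universal operators on $\mathcal{C}_2(\mathcal{H})$; (ii) $(L_B,R_{B^*})$ is not a universal commuting pair on $\mathcal{C}_2(\ell^2)$; (iii) $(L_{B_\infty},R_{B_\infty^*})$ is a universal commuting pair on $\mathcal{C}_2(\mathcal{H})$.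
   Context: For a separable Hilbert space $K$, $\mathcal{C}_2(K)$ is the Hilbert space of Hilbert–Schmidt operators on $K$ with the Hilbert–Schmidt norm $\|T\|_2=(\sum_n\|Tf_n\|^2)^{1/2}$ for an orthonormal basis $(f_n)$. For $U\in\mathcal{L}(K)$, $L_U(S)=US$ and $R_U(S)=SU$ for $S\in\mathcal{C}_2(K)$; these are bounded operators on $\mathcal{C}_2(K)$ and $L_U$, $R_V$ commute. An operator $U$ on a separable infinite-dimensional Hilbert space $E$ is universal if for every $T\in\mathcal{L}(E)$ there exist a closed $U$-invariant subspace $M\subset E$ and $c\neq0$ such that $U|_M$ is similar to $cT$ (i.e. $U|_M=J^{-1}(cT)J$ for some linear isomorphism $J:M\to E$). A commuting pair $(U_1,U_2)\in\mathcal{L}(E)^2$ is a universal commuting pair if for every commuting pair $(S_1,S_2)\in\mathcal{L}(E)^2$ there exist $c\neq0$, a closed subspace $M\subset E$ invariant under both $U_1,U_2$, and a linear isomorphism $V:E\to M$ with $U_1V=cVS_1$ and $U_2V=cVS_2$. *)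

(* Defs.v *)
From HB Require Import structures.
From mathcomp Require Import all_boot all_order all_algebra.
From mathcomp Require Import complex.
From mathcomp Require Import all_classical all_reals all_analysis.
Set Implicit Arguments. Unset Strict Implicit. Unset Printing Implicit Defensive.
Import Order.TTheory GRing.Theory Num.Theory.
Import numFieldNormedType.Exports.
Local Open Scope classical_set_scope.
Local Open Scope ring_scope.

Section L2.
Variable R : realType.
Local Notation C := (R[i]).

Definition sqmod (z : C) : R := (complex.Re z) ^+ 2 + (complex.Im z) ^+ 2.

Definition cconj (z : C) : C := complex.Complex (complex.Re z) (- complex.Im z).

Definition is_l2 {I : choiceType} (f : I -> C) : Prop :=
  (\esum_(i in [set: I]) ((sqmod (f i))%:E) < +oo)%E.

Definition l2norm {I : choiceType} (f : I -> C) : R :=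
  Num.sqrt (fine (\esum_(i in [set: I]) ((sqmod (f i))%:E))).

Definition vlin {I : Type} (a : C) (f g : I -> C) : I -> C := fun i => a * f i + g i.
Definition vscale {I : Type} (a : C) (f : I -> C) : I -> C := fun i => a * f i.
Definition vsub {I : Type} (f g : I -> C) : I -> C := fun i => f i - g i.
Definition vzero {I : Type} : I -> C := fun _ => 0.

Section Ops.
Variable I : choiceType.
Local Notation vec := (I -> C).

Definition lin_on (D : set vec) (T : vec -> vec) : Prop :=
  forall a f g, D f -> D g -> T (vlin a f g) = vlin a (T f) (T g).

(** bounded linear operators on l^2(I) (only their values on l^2(I) matter) *)
Definition bounded_op (T : vec -> vec) : Prop :=
  [/\ forall f, is_l2 f -> is_l2 (T f),
      lin_on is_l2 T &
      exists k : R, forall f, is_l2 f -> l2norm (T f) <= k * l2norm f].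

Definition closed_subspace (M : set vec) : Prop :=
  [/\ M `<=` is_l2, M vzero,
      (forall a f g, M f -> M g -> M (vlin a f g)) &
      (forall (u : nat -> vec) (x : vec), (forall n, M (u n)) -> is_l2 x ->
         (fun n => l2norm (vsub (u n) x)) @ \oo --> (0 : R) -> M x)].

Definition invariant (U : vec -> vec) (M : set vec) : Prop :=
  forall f, M f -> M (U f).

Definition lin_iso (D1 D2 : set vec) (J : vec -> vec) : Prop :=
  [/\ forall f, D1 f -> D2 (J f),
      lin_on D1 J,
      (forall g, D2 g -> exists2 f, D1 f & J f = g) &
      exists k1 k2 : R, forall f, D1 f ->
         l2norm (J f) <= k1 * l2norm f /\ l2norm f <= k2 * l2norm (J f)].

Definition universal (U : vec -> vec) : Prop :=
  bounded_op U /\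
  forall T, bounded_op T ->
    exists (M : set vec) (c : C) (J : vec -> vec),
      [/\ closed_subspace M, invariant U M, c != 0, lin_iso M is_l2 J &
          forall f, M f -> J (U f) = vscale c (T (J f))].

Definition commuting_pair (U1 U2 : vec -> vec) : Prop :=
  [/\ bounded_op U1, bounded_op U2 &
      forall f, is_l2 f -> U1 (U2 f) = U2 (U1 f)].

Definition universal_commuting_pair (U1 U2 : vec -> vec) : Prop :=
  commuting_pair U1 U2 /\
  forall S1 S2, commuting_pair S1 S2 ->
    exists (c : C) (M : set vec) (V : vec -> vec),
      [/\ c != 0, closed_subspace M, invariant U1 M /\ invariant U2 M,
          lin_iso is_l2 M V &
          forall f, is_l2 f ->
            U1 (V f) = vscale c (V (S1 f)) /\ U2 (V f) = vscale c (V (S2 f))].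
End Ops.

(** Hilbert–Schmidt operators on K = l^2(I) are represented by their matrices
    s(i,j) = <S e_j, e_i>; this identifies C_2(l^2(I)) isometrically with
    l^2(I * I). *)
Section HS.
Variable I : choiceType.

(** L_U(S) = U S : the j-th column of U S is U applied to the j-th column of S. *)
Definition Lmul (U : (I -> C) -> (I -> C)) (s : I * I -> C) : I * I -> C :=
  fun p => U (fun k => s (k, p.2)) p.1.

Definition adjmx (s : I * I -> C) : I * I -> C := fun p => cconj (s (p.2, p.1)).

(** R_{V^*}(S) = S V^* = (V S^* )^* . *)
Definition Radj (V : (I -> C) -> (I -> C)) (s : I * I -> C) : I * I -> C :=
  adjmx (Lmul V (adjmx s)).
End HS.

Definition bshift (x : nat -> C) : nat -> C := fun n => x n.+1.

(** backward shift B_oo on l^2(Z_+, H) with H = l^2(Z_+): a vector (x_n)_n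
    with x_n in H is represented by x(n,k) = k-th coordinate of x_n. *)
Definition bshift_inf (x : nat * nat -> C) : nat * nat -> C :=
  fun p => x (p.1.+1, p.2).

End L2.

(* Main.v *)
Require Import Defs.
From HB Require Import structures.
From mathcomp Require Import all_boot all_order all_algebra.
From mathcomp Require Import complex.
From mathcomp Require Import all_classical all_reals all_analysis.
From mathcomp Require Import ring lra.
From Stdlib Require Cantor.
Import Order.TTheory GRing.Theory Num.Theory.
Import numFieldNormedType.Exports.
Local Open Scope classical_set_scope.
Local Open Scope ring_scope.

Section E.
Context {R : realType}.
Local Open Scope ereal_scope.

Lemma esum_subset (T : choiceType) (A B : set T) (a : T -> \bar R) :
  A `<=` B -> \esum_(i in A) a i <= \esum_(i in B) a i.
Proof.
move=> AB; apply: ge_ereal_sup => _ [X [finX XA] <-].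
by apply: ereal_sup_ubound; exists X => //; split => // x /XA /AB.
Qed.

Lemma esumZ_le (T : choiceType) (S : set T) (k : R) (a : T -> \bar R) :
  (0 <= k)%R -> (forall x, 0 <= a x) ->
  \esum_(i in S) (k%:E * a i) <= k%:E * \esum_(i in S) a i.
Proof.
move=> k0 a0; apply: ge_ereal_sup => _ [X [finX XS] <-].
rewrite -ge0_mule_fsumr //; rewrite lee_wpmul2l ?lee_fin //.
by apply: ereal_sup_ubound; exists X.
Qed.

Lemma esum_single (T : choiceType) (a : T -> \bar R) (i : T) :
  (forall x, 0 <= a x) -> a i <= \esum_(x in [set: T]) a x.
Proof.
move=> a0; apply: esum_ge; exists [set i]; first by split => //; exact: finite_set1.
by rewrite fsbig_set1.
Qed.

Lemma esum_bij (T T' : choiceType) (e : T -> T') (e' : T' -> T) (a : T' -> \bar R) :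
  cancel e e' -> cancel e' e ->
  \esum_(j in [set: T']) a j = \esum_(i in [set: T]) a (e i).
Proof.
move=> c1 c2; apply: reindex_esum; split.
- by move=> x _.
- by move=> x y _ _ /(congr1 e'); rewrite !c1.
- by move=> y _; exists (e' y) => //; rewrite c2.
Qed.

Lemma esum_inj (T T' : choiceType) (e : T -> T') (a : T' -> \bar R) :
  injective e ->
  \esum_(i in [set: T]) a (e i) <= \esum_(j in [set: T']) a j.
Proof.
move=> ie; rewrite -(esum_image setT e a); last by move=> x y _ _; exact: ie.
exact: esum_subset.
Qed.

Lemma esum_prod (T1 T2 : choiceType) (a : T1 * T2 -> \bar R) :
  (forall x, 0 <= a x) ->
  \esum_(p in [set: T1 * T2]) a p = \esum_(i in [set: T1]) \esum_(j in [set: T2]) a (i, j).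
Proof.
move=> a0; rewrite (@esum_esum R T1 T2 setT (fun=> setT) (fun i j => a (i, j))) //.
have -> : [set: T1] `*`` (fun=> [set: T2]) = [set: T1 * T2].
  by apply/seteqP; split => // -[].
by apply: eq_esum => -[].
Qed.

End E.

Section SQ.
Context {R : realType}.
Local Notation C := (R[i]).
Lemma sqmod_mul (a z : C) : sqmod (a * z) = sqmod a * sqmod z.
Proof. case: a => a1 a2; case: z => z1 z2; rewrite /sqmod /=. ring. Qed.
Lemma sqmod_add (a z : C) : sqmod (a + z) <= 2 * sqmod a + 2 * sqmod z.
Proof. case: a => a1 a2; case: z => z1 z2; rewrite /sqmod /=.
have h1 := sqr_ge0 (a1 - z1); have h2 := sqr_ge0 (a2 - z2). nra. Qed.
Lemma sqmod_ge0 (a : C) : 0 <= sqmod a.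
Proof. case: a => a1 a2; rewrite /sqmod /=. nra. Qed.
Lemma sqmod_opp (a : C) : sqmod (- a) = sqmod a.
Proof. case: a => a1 a2; rewrite /sqmod /=. ring. Qed.
Lemma sqmod0 : sqmod (0 : C) = 0.
Proof. rewrite /sqmod /=. ring. Qed.
Lemma sqmod_eq0 (a : C) : sqmod a = 0 -> a = 0.
Proof. case: a => a1 a2; rewrite /sqmod /= => h.
have h1 : a1 = 0 by nra. have h2 : a2 = 0 by nra. by rewrite h1 h2. Qed.
Lemma cconjK (a : C) : cconj (cconj a) = a.
Proof. case: a => a1 a2; by rewrite /cconj /= opprK. Qed.
End SQ.

Section NSQ.
Context {R : realType}.
Context {I : choiceType}.
Local Notation C := (R[i]).
Local Notation vec := (I -> C).
Local Open Scope ereal_scope.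

Definition nsq (f : vec) : \bar R := \esum_(i in [set: I]) (sqmod (f i))%:E.

Lemma nsq_ge0 (f : vec) : 0 <= nsq f.
Proof. by apply: esum_ge0 => x _; rewrite lee_fin sqmod_ge0. Qed.

Lemma sqmod_le_nsq (f : vec) i : (sqmod (f i))%:E <= nsq f.
Proof. by apply: (@esum_single R I (fun i => (sqmod (f i))%:E)) => x; rewrite lee_fin sqmod_ge0. Qed.

Lemma nsq_fin {f : vec} : is_l2 f -> nsq f = (fine (nsq f))%:E.
Proof. move=> h; rewrite fineK // ge0_fin_numE //; exact: nsq_ge0. Qed.

Lemma fine_nsq_ge0 (f : vec) : (0 <= fine (nsq f))%R.
Proof. exact/fine_ge0/nsq_ge0. Qed.

Lemma nsq_vlin (a : C) (f g : vec) : nsq (vlin a f g) <= (2 * sqmod a)%:E * nsq f + 2%:E * nsq g.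
Proof.
rewrite /nsq.
apply: (@le_trans _ _ (\esum_(i in [set: I]) ((2 * sqmod a)%:E * (sqmod (f i))%:E + 2%:E * (sqmod (g i))%:E))).
  apply: le_esum => i _; rewrite -!EFinM -EFinD lee_fin /vlin.
  apply: le_trans (sqmod_add _ _) _; rewrite sqmod_mul mulrA //.
rewrite esumD; last 2 first.
- by move=> i _; rewrite -EFinM lee_fin mulr_ge0 ?mulr_ge0 ?sqmod_ge0.
- by move=> i _; rewrite -EFinM lee_fin mulr_ge0 ?sqmod_ge0.
apply: leeD; apply: esumZ_le => //; try (by move=> x; rewrite lee_fin sqmod_ge0).
by rewrite mulr_ge0 ?sqmod_ge0.
Qed.

Lemma is_l2_vlin (a : C) (f g : vec) : is_l2 f -> is_l2 g -> is_l2 (vlin a f g).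
Proof.
move=> hf hg; rewrite /is_l2 -/(nsq _).
apply: (le_lt_trans (nsq_vlin a f g)).
by rewrite (nsq_fin hf) (nsq_fin hg) -!EFinM -EFinD ltry.
Qed.

Lemma nsq_vscale (a : C) (f : vec) : nsq (vscale a f) <= (sqmod a)%:E * nsq f.
Proof.
rewrite /nsq.
apply: (@le_trans _ _ (\esum_(i in [set: I]) ((sqmod a)%:E * (sqmod (f i))%:E))).
  by apply: le_esum => i _; rewrite -EFinM lee_fin /vscale sqmod_mul.
by apply: esumZ_le; [exact: sqmod_ge0| move=> x; rewrite lee_fin sqmod_ge0].
Qed.

Lemma is_l2_vscale (a : C) (f : vec) : is_l2 f -> is_l2 (vscale a f).
Proof.
move=> hf; rewrite /is_l2 -/(nsq _); apply: (le_lt_trans (nsq_vscale a f)).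
by rewrite (nsq_fin hf) -EFinM ltry.
Qed.

Lemma nsq_zero : nsq (@vzero R I) = 0.
Proof. by apply: esum1 => i _; rewrite /vzero sqmod0. Qed.

Lemma is_l2_zero : is_l2 (@vzero R I).
Proof. by rewrite /is_l2 -/(nsq _) nsq_zero ltry. Qed.

Lemma nsq_eq0 (f : vec) : nsq f = 0 -> f = vzero R.
Proof.
move=> h; apply/funext => i; apply: sqmod_eq0; apply/eqP; rewrite eq_le sqmod_ge0 andbT.
by have := sqmod_le_nsq f i; rewrite h lee_fin.
Qed.

Lemma vsubE (f g : vec) : vsub f g = vlin (-1)%R g f.
Proof. by apply/funext => i; rewrite /vsub /vlin mulN1r addrC. Qed.

Lemma vscaleE a (f : vec) : vscale a f = vlin a f (vzero R).
Proof. by apply/funext => i; rewrite /vscale /vlin /vzero addr0. Qed.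

Lemma is_l2_vsub (f g : vec) : is_l2 f -> is_l2 g -> is_l2 (vsub f g).
Proof. by move=> hf hg; rewrite vsubE; apply: is_l2_vlin. Qed.

Lemma l2norm_le (f g : vec) (k : R) : is_l2 f -> is_l2 g -> (0 <= k)%R ->
  nsq g <= k%:E * nsq f -> (l2norm g <= Num.sqrt k * l2norm f)%R.
Proof.
move=> hf hg k0; rewrite (nsq_fin hf) (nsq_fin hg) -EFinM lee_fin => h.
by rewrite /l2norm -/(nsq _) -/(nsq _) -sqrtrM // ler_wsqrtr.
Qed.

Lemma nsq_le (f g : vec) (k : R) : is_l2 f -> is_l2 g ->
  (l2norm g <= k * l2norm f)%R -> nsq g <= (k ^+ 2)%:E * nsq f.
Proof.
move=> hf hg; rewrite (nsq_fin hf) (nsq_fin hg) -EFinM lee_fin /l2norm.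
have a0 := fine_nsq_ge0 f; have b0 := fine_nsq_ge0 g.
move: a0 b0; rewrite /nsq.
move: (fine _) (fine _) => b a a0 b0 h.
have s0 : (0 <= Num.sqrt b)%R by exact: sqrtr_ge0.
rewrite -(sqr_sqrtr a0) -(sqr_sqrtr b0).
have h2 : (Num.sqrt b ^+ 2 <= (k * Num.sqrt a) ^+ 2)%R.
  have := le_trans s0 h => h3. nra.
by rewrite exprMn in h2.
Qed.

End NSQ.
Section LIN.
Context {R : realType}.
Variable I : choiceType.
Local Notation C := (R[i]).
Local Notation vec := (I -> C).
Local Notation L2 := (@is_l2 R I).

Lemma lin_zero (T : vec -> vec) : lin_on L2 T -> T (vzero R) = vzero R.
Proof.
move=> HT; have := HT (-1) (vzero R) (vzero R) is_l2_zero is_l2_zero.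
have -> : vlin (-1) (vzero R) (vzero R) = vzero R :> vec.
  by apply/funext => i; rewrite /vlin /vzero mulr0 addr0.
move=> h; apply/funext => i; have := congr1 (fun F => F i) h.
by rewrite /vlin /= mulN1r => ->; rewrite addNr.
Qed.

Lemma lin_sub (T : vec -> vec) (f g : vec) : lin_on L2 T -> is_l2 f -> is_l2 g ->
  T (vsub f g) = vsub (T f) (T g).
Proof. by move=> HT hf hg; rewrite !vsubE; apply: HT. Qed.

Lemma lin_scale (T : vec -> vec) (a : C) (f : vec) : lin_on L2 T -> is_l2 f ->
  T (vscale a f) = vscale a (T f).
Proof.
move=> HT hf; rewrite !vscaleE HT //; last exact: is_l2_zero.
by rewrite lin_zero.
Qed.

Lemma lim_small (u : nat -> vec) (d K : R) :
  (fun n => l2norm (u n)) @ \oo --> (0 : R) -> (forall n, is_l2 (u n)) -> 0 <= K ->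
  (forall n, (d%:E <= K%:E * nsq (u n))%E) -> d <= 0.
Proof.
move=> hc hu K0 hd.
suff H : forall e, 0 < e -> d <= e.
  by case: (lerP d 0) => // hd0; have := H (d / 2); lra.
move=> e e0.
have K1 : 0 < K + 1 by lra.
set eps := Num.sqrt (e / (K + 1)).
have eps0 : 0 < eps by rewrite sqrtr_gt0 divr_gt0.
move/cvgrPdist_lt: hc => /(_ eps eps0) [N _ hN].
have := hN N (leqnn N); rewrite /= sub0r normrN.
have := hd N; rewrite (nsq_fin (hu N)) -EFinM lee_fin.
rewrite /l2norm -/(nsq _).
have x0 := fine_nsq_ge0 (u N); move: x0; move: (fine _) => x x0 h1.
rewrite ger0_norm ?sqrtr_ge0 // => h2.
have h3 : x < e / (K + 1).
  have := sqr_sqrtr x0 => <-.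
  have := @sqr_sqrtr _ (e / (K + 1)) (ltW (divr_gt0 e0 K1)) => <-.
  have s0 := sqrtr_ge0 x. rewrite -/eps. nra.
have h4 : K * x <= K * (e / (K + 1)) by apply: ler_wpM2l => //; exact: ltW.
have h5 : K * (e / (K + 1)) <= e.
  rewrite mulrA ler_pdivrMr //. nra.
lra.
Qed.
End LIN.
Section FINE.
Context {R : realType} {I : choiceType}.
Local Notation L2 := (@is_l2 R I).
Lemma fine_le (f g : I -> R[i]) (k : R) : L2 f -> L2 g -> (nsq g <= k%:E * nsq f)%E ->
  fine (nsq g) <= k * fine (nsq f).
Proof. by move=> hf hg; rewrite {1}(nsq_fin hf) {1}(nsq_fin hg) -EFinM lee_fin. Qed.
Lemma sqmod_le_fine (f : I -> R[i]) i : L2 f -> sqmod (f i) <= fine (nsq f).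
Proof. by move=> hf; have := sqmod_le_nsq f i; rewrite {1}(nsq_fin hf) lee_fin. Qed.
End FINE.

Section CORE.
Context {R : realType}.
Variables (I N K : choiceType).
Local Notation C := (R[i]).
Local Notation vec := (I -> C).
Local Notation L2 := (@is_l2 R I).
Variables (pi : N * K -> I) (pii : I -> N * K) (sg : K -> I) (sgi : I -> K).
Hypothesis piK : cancel pi pii.
Hypothesis piiK : cancel pii pi.
Hypothesis sgK : cancel sg sgi.
Hypothesis sgiK : cancel sgi sg.
Variable P : N -> vec -> vec.
Variable n0 : N.
Hypothesis HP0 : forall x, P n0 x = x.
Hypothesis HPl2 : forall n x, L2 x -> L2 (P n x).
Hypothesis HPlin : forall n, lin_on L2 (P n).
Variable Cst : R.
Hypothesis Cst0 : 0 <= Cst.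
Hypothesis HPsum : forall x, L2 x -> (\esum_(n in [set: N]) nsq (P n x) <= Cst%:E * nsq x)%E.

Definition s0 (f : vec) : vec := fun i => f (pi (n0, sgi i)).
Definition Phi (x : vec) : vec := fun i => P (pii i).1 x (sg (pii i).2).
Definition Mset : set vec := fun f => L2 f /\ forall n k, f (pi (n, k)) = P n (s0 f) (sg k).

Lemma nsq_Phi x : nsq (Phi x) = (\esum_(n in [set: N]) nsq (P n x))%E.
Proof.
rewrite /nsq (@esum_bij R _ _ pi pii _ piK piiK) /=.
have -> : (\esum_(i in [set: N * K]) (sqmod (Phi x (pi i)))%:E =
   \esum_(p in [set: N * K]) (sqmod (P p.1 x (sg p.2)))%:E)%E.
  by apply: eq_esum => p _; rewrite /Phi piK.
rewrite esum_prod; last by move=> p; rewrite lee_fin sqmod_ge0.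
apply: eq_esum => n _ /=.
by rewrite (@esum_bij R _ _ sg sgi _ sgK sgiK).
Qed.

Lemma nsq_Phi_le {x} : L2 x -> (nsq (Phi x) <= Cst%:E * nsq x)%E.
Proof. by move=> hx; rewrite nsq_Phi; apply: HPsum. Qed.

Lemma Phi_l2 {x} : L2 x -> L2 (Phi x).
Proof.
move=> hx; rewrite /is_l2 -/(nsq _); apply: (le_lt_trans (nsq_Phi_le hx)).
by rewrite (nsq_fin hx) -EFinM ltry.
Qed.

Lemma nsq_P_le n {x} : L2 x -> (nsq (P n x) <= Cst%:E * nsq x)%E.
Proof.
move=> hx; apply: (le_trans _ (HPsum x hx)).
by apply: (@esum_single R N (fun n => nsq (P n x))) => m; exact: nsq_ge0.
Qed.

Lemma s0_Phi x : s0 (Phi x) = x.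
Proof. by apply/funext => i; rewrite /s0 /Phi piK /= HP0 sgiK. Qed.

Lemma Phi_s0 {f} : Mset f -> Phi (s0 f) = f.
Proof.
move=> [_ hf]; apply/funext => i; rewrite /Phi -[in RHS](piiK i).
by case: (pii i) => n k /=; rewrite hf.
Qed.

Lemma M_Phi {x} : L2 x -> Mset (Phi x).
Proof. by move=> hx; split; [exact: Phi_l2| move=> n k; rewrite s0_Phi /Phi piK]. Qed.

Lemma nsq_s0 f : (nsq (s0 f) <= nsq f)%E.
Proof.
rewrite /nsq /s0.
apply: (@esum_inj R _ _ (fun i => pi (n0, sgi i)) (fun j => (sqmod (f j))%:E)).
move=> i j /(congr1 pii); rewrite !piK => -[] /(congr1 sg); by rewrite !sgiK.
Qed.

Lemma s0_l2 {f} : L2 f -> L2 (s0 f).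
Proof. by move=> hf; rewrite /is_l2 -/(nsq _); apply: le_lt_trans (nsq_s0 f) hf. Qed.

Lemma Phi_lin : lin_on L2 Phi.
Proof. by move=> a f g hf hg; apply/funext => i; rewrite /Phi HPlin. Qed.

Lemma M_closed : closed_subspace Mset.
Proof.
split.
- by move=> f [].
- split; first exact: is_l2_zero.
  move=> n k; have -> : s0 (vzero R) = vzero R by [].
  by rewrite lin_zero.
- move=> a f g [hf Hf] [hg Hg]; split; first exact: is_l2_vlin.
  move=> n k; have -> : s0 (vlin a f g) = vlin a (s0 f) (s0 g) by [].
  rewrite HPlin; [by rewrite /vlin /= Hf Hg | exact: s0_l2 hf | exact: s0_l2 hg].
- move=> u x hu hx hc; split => // n k.
  apply/eqP; rewrite -subr_eq0; apply/eqP; apply: sqmod_eq0.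
  apply/eqP; rewrite eq_le sqmod_ge0 andbT.
  have hw : forall j, L2 (vsub (u j) x) by move=> j; apply: is_l2_vsub => //; exact: (hu j).1.
  apply: (@lim_small R I (fun j => vsub (u j) x) _ (2 + 2 * Cst)) => //.
    by rewrite addr_ge0 // mulr_ge0.
  move=> j; set w := vsub (u j) x.
  have e1 : x (pi (n,k)) - P n (s0 x) (sg k) = - w (pi (n,k)) + P n (s0 w) (sg k).
    have -> : s0 w = vsub (s0 (u j)) (s0 x) by [].
    rewrite (@lin_sub R I (P n) (s0 (u j)) (s0 x) (HPlin n) (s0_l2 (hu j).1) (s0_l2 hx)).
    by rewrite /w /vsub ((hu j).2 n k); ring.
  rewrite e1 (nsq_fin (hw j)) -EFinM lee_fin.
  have hw' := hw j; rewrite -/w in hw'.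
  have A1 := sqmod_le_fine _ (pi (n, k)) hw'.
  have A2 := sqmod_le_fine _ (sg k) (HPl2 n _ (s0_l2 hw')).
  have A3 := fine_le _ _ _ (s0_l2 hw') (HPl2 n _ (s0_l2 hw')) (nsq_P_le n (s0_l2 hw')).
  have A4 : fine (nsq (s0 w)) <= 1 * fine (nsq w).
    by apply: fine_le => //; [exact: s0_l2 | rewrite mul1e; exact: nsq_s0].
  have A5 := sqmod_add (- w (pi (n, k))) (P n (s0 w) (sg k)).
  rewrite sqmod_opp in A5.
  have A6 := ler_wpM2l Cst0 A4.
  have B0 := sqmod_ge0 (w (pi (n, k))).
  lra.
Qed.

Lemma iso_s0 : lin_iso Mset L2 s0.
Proof.
split.
- by move=> f [hf _]; exact: s0_l2.
- by move=> a f g _ _.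
- by move=> g hg; exists (Phi g); [exact: M_Phi | exact: s0_Phi].
- exists 1, (Num.sqrt Cst) => f Mf; have hf := Mf.1; split.
  + have := @l2norm_le R I f (s0 f) 1 hf (s0_l2 hf) ler01.
    by rewrite sqrtr1 mul1e => /(_ (nsq_s0 f)).
  + rewrite -{1}(Phi_s0 Mf).
    exact: (@l2norm_le R I _ _ _ (s0_l2 hf) (Phi_l2 (s0_l2 hf)) Cst0 (nsq_Phi_le (s0_l2 hf))).
Qed.

Lemma iso_Phi : lin_iso L2 Mset Phi.
Proof.
split.
- by move=> x hx; exact: M_Phi.
- exact: Phi_lin.
- by move=> f Mf; exists (s0 f); [exact: (s0_l2 Mf.1) | exact: (Phi_s0 Mf)].
- exists (Num.sqrt Cst), 1 => x hx; split.
  + exact: (@l2norm_le R I _ _ _ hx (Phi_l2 hx) Cst0 (nsq_Phi_le hx)).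
  + have := @l2norm_le R I (Phi x) x 1 (Phi_l2 hx) hx ler01.
    rewrite sqrtr1 mul1e; apply; rewrite -{1}(s0_Phi x); exact: nsq_s0.
Qed.

Lemma core_pack : closed_subspace Mset /\ lin_iso Mset L2 s0 /\ lin_iso L2 Mset Phi /\
  (forall x, s0 (Phi x) = x) /\ (forall f, Mset f -> Phi (s0 f) = f) /\ (forall x, L2 x -> Mset (Phi x)).
Proof using piK piiK sgK sgiK HP0 HPl2 HPlin Cst0 HPsum.
split; first exact: M_closed.
split; first exact: iso_s0.
split; first exact: iso_Phi.
split; first exact: s0_Phi.
split; first by move=> f; exact: Phi_s0.
by move=> x; exact: M_Phi.
Qed.

End CORE.

Section GEO.
Context {R : realType} {I : choiceType}.
Local Notation C := (R[i]).
Local Notation vec := (I -> C).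
Local Notation L2 := (@is_l2 R I).

Lemma op_bound (T : vec -> vec) : bounded_op T ->
  exists k0 : R, 0 <= k0 /\ forall y, L2 y -> (nsq (T y) <= k0%:E * nsq y)%E.
Proof.
case=> Tl2 _ [k Tk]; exists (k ^+ 2); split; first exact: sqr_ge0.
by move=> y hy; apply: nsq_le => //; [exact: Tl2 | exact: Tk].
Qed.

Definition cst_of (k0 : R) : C := complex.Complex ((2 * (k0 + 1))^-1) 0.

Lemma cst_of_neq0 k0 : 0 <= k0 -> cst_of k0 != 0.
Proof.
move=> k0p; rewrite /cst_of; apply/eqP => -[] /eqP.
by rewrite invr_eq0 mulf_eq0 /=; apply/negP; rewrite negb_or; apply/andP; split; apply/eqP; lra.
Qed.

Lemma contract (k0 : R) (T : vec -> vec) : 0 <= k0 -> (forall y, L2 y -> L2 (T y)) ->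
  (forall y, L2 y -> (nsq (T y) <= k0%:E * nsq y)%E) ->
  forall y, L2 y -> (nsq (vscale (cst_of k0) (T y)) <= (2^-1)%:E * nsq y)%E.
Proof.
move=> k0p Tl2 Tk y hy.
have h1 := is_l2_vscale (cst_of k0) (T y) (Tl2 y hy).
have A1 := fine_le _ _ _ (Tl2 y hy) h1 (nsq_vscale (cst_of k0) (T y)).
have A2 := fine_le _ _ _ hy (Tl2 y hy) (Tk y hy).
rewrite (nsq_fin h1) (nsq_fin hy) -EFinM lee_fin.
move: A1 A2; rewrite /cst_of /sqmod /=.
have B0 := fine_nsq_ge0 y; have B1 := fine_nsq_ge0 (T y).
move: (fine (nsq y)) (fine (nsq (T y))) (fine (nsq (vscale _ _))) B0 B1 => b t v B0 B1 A1 A2.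
set r := (2 * (k0 + 1))^-1.
have r0 : 0 < r by rewrite invr_gt0; lra.
have hk : k0 + 1 != 0 by apply/eqP; lra.
have rK : r * (k0 + 1) = 2^-1 by rewrite /r invfM mulrAC mulfK.
have r2 : r <= 2^-1 by nra.
have C1 : (r ^+ 2 + 0 ^+ 2) * t <= r ^+ 2 * (k0 * b) by rewrite expr0n /= addr0; apply: ler_wpM2l => //; exact: sqr_ge0.
have E0 := mulr_ge0 (mulr_ge0 (ltW r0) (ltW r0)) B0.
have D1 : r ^+ 2 * (k0 * b) <= r * 2^-1 * b.
  rewrite -rK expr2. nra.
have D2 : r * 2^-1 * b <= 2^-1 * b.
  have := mulr_ge0 (ltW r0) B0. nra.
have A1r : v <= (r ^+ 2 + 0 ^+ 2) * t := A1.
lra.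
Qed.

Lemma geo_sum (b : R) : 0 <= b ->
  (\esum_(n in [set: nat]) (((2^-1) ^+ n * b)%:E) <= (2 * b)%:E)%E.
Proof.
move=> b0.
have -> : (\esum_(n in [set: nat]) (((2^-1) ^+ n * b)%:E) =
     \esum_(n in [set: nat]) (((2 * b) / (2 ^ n.+1)%:R)%:E))%E.
  apply: eq_esum => n _; congr (_%:E); rewrite natrX exprS exprVn; field.
  by rewrite expf_neq0.
rewrite -nneseries_esumT; last by move=> n; rewrite lee_fin divr_ge0 // mulr_ge0.
by apply: epsilon_trick0; rewrite mulr_ge0.
Qed.

End GEO.
Section ITER.
Context {R : realType} {I : choiceType}.
Local Notation C := (R[i]).
Local Notation vec := (I -> C).
Local Notation L2 := (@is_l2 R I).

Lemma scaled_op (T : vec -> vec) (c : C) : bounded_op T ->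
  let G := fun y => vscale c (T y) in
  (forall y, L2 y -> L2 (G y)) /\ lin_on L2 G.
Proof.
case=> Tl2 Tlin _ G; split.
- by move=> y hy; apply: is_l2_vscale; exact: Tl2.
- move=> a f g hf hg; rewrite /G Tlin //; apply/funext => i; rewrite /vscale /vlin /=; ring.
Qed.

Lemma iter_props (G : vec -> vec) :
  (forall y, L2 y -> L2 (G y)) -> lin_on L2 G ->
  (forall n x, L2 x -> L2 (iter n G x)) /\ (forall n, lin_on L2 (iter n G)).
Proof.
move=> Gl2 Glin.
have Pl2 : forall n x, L2 x -> L2 (iter n G x).
  by elim => [|n IH] x hx //=; apply: Gl2; apply: IH.
split => //; elim => [|n IH] a f g hf hg //=.
by rewrite IH // Glin //; apply: Pl2.
Qed.

Lemma iter_bound (G : vec -> vec) :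
  (forall y, L2 y -> L2 (G y)) ->
  (forall y, L2 y -> (nsq (G y) <= (2^-1)%:E * nsq y)%E) ->
  forall n x, L2 x -> (nsq (iter n G x) <= ((2^-1) ^+ n)%:E * nsq x)%E.
Proof.
move=> Gl2 Gc; elim => [|n IH] x hx /=; first by rewrite expr0 mul1e.
have hn : L2 (iter n G x).
  by elim: n {IH} => [|n IHn] //=; apply: Gl2.
apply: (le_trans (Gc _ hn)).
rewrite exprS EFinM -muleA; apply: lee_wpmul2l; [by rewrite lee_fin invr_ge0 | exact: IH].
Qed.

Lemma iter_sum (G : vec -> vec) :
  (forall y, L2 y -> L2 (G y)) ->
  (forall y, L2 y -> (nsq (G y) <= (2^-1)%:E * nsq y)%E) ->
  forall x, L2 x -> (\esum_(n in [set: nat]) nsq (iter n G x) <= (2:R)%:E * nsq x)%E.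
Proof.
move=> Gl2 Gc x hx.
apply: (@le_trans _ _ (\esum_(n in [set: nat]) (((2^-1) ^+ n * fine (nsq x))%:E))).
  by apply: le_esum => n _; rewrite EFinM -(nsq_fin hx); exact: iter_bound.
by rewrite (nsq_fin hx) -EFinM; apply: geo_sum; exact: fine_nsq_ge0.
Qed.
End ITER.

Section SHIFT1.
Context {R : realType}.
Variables (I K : choiceType).
Local Notation C := (R[i]).
Local Notation vec := (I -> C).
Local Notation L2 := (@is_l2 R I).
Variables (pi : nat * K -> I) (pii : I -> nat * K) (sg : K -> I) (sgi : I -> K).
Hypothesis piK : cancel pi pii.
Hypothesis piiK : cancel pii pi.
Hypothesis sgK : cancel sg sgi.
Hypothesis sgiK : cancel sgi sg.
Variable U : vec -> vec.
Hypothesis HU : bounded_op U.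
Hypothesis HUs : forall f n k, U f (pi (n, k)) = f (pi (n.+1, k)).

Theorem shift_universal : universal U.
Proof.
split => // T HT.
have [k0 [k0p Tk]] := op_bound T HT.
have [Gl2 Glin] := scaled_op T (cst_of k0) HT.
case: HT => Tl2 Tlin _.
set c := cst_of k0.
set G := fun y => vscale c (T y).
have Gc : forall y, L2 y -> (nsq (G y) <= (2^-1)%:E * nsq y)%E := contract k0 T k0p Tl2 Tk.
have [Pl2 Plin] := iter_props G Gl2 Glin.
have Psum := iter_sum G Gl2 Gc.
have := @core_pack R I nat K pi pii sg sgi piK piiK sgK sgiK (fun n => iter n G) 0%N
   (fun x => erefl) Pl2 Plin 2 ltac:(by []) Psum.
set M := Mset _ _ _ _ _ _ _ _.
set J := s0 _ _ _ _ _ _.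
set Ph := Phi _ _ _ _ _ _.
move=> [Mcl [isoJ [isoP [JP [PJ MP]]]]].
have key : forall g, L2 g -> U (Ph g) = vscale c (Ph (T g)).
  move=> g hg; apply/funext => i; rewrite -(piiK i); case: (pii i) => n k.
  rewrite HUs /Ph /Phi piK /= -iterS iterSr /vscale /= piK /=.
  have -> : G g = vscale c (T g) by [].
  by rewrite (lin_scale I (iter n G) c (T g) (Plin n) (Tl2 g hg)).
have Jscale : forall h, J (vscale c h) = vscale c (J h) by [].
have Minv : Defs.invariant U M.
  move=> f Mf; rewrite -(PJ f Mf) key; last by case: isoJ => + _ _ _; apply.
  rewrite vscaleE; case: Mcl => _ M0 Mlin _; apply: Mlin => //.
  apply: MP; apply: Tl2; by case: isoJ => + _ _ _; apply.
exists M, c, J; split => //.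
- exact: cst_of_neq0.
- move=> f Mf; have hJ : L2 (J f) by case: isoJ => + _ _ _; apply.
  by rewrite -{1}(PJ f Mf) key // Jscale JP.
Qed.
End SHIFT1.
Section SHIFT2.
Context {R : realType}.
Variables (I K : choiceType).
Local Notation C := (R[i]).
Local Notation vec := (I -> C).
Local Notation L2 := (@is_l2 R I).
Variables (pi : (nat * nat) * K -> I) (pii : I -> (nat * nat) * K) (sg : K -> I) (sgi : I -> K).
Hypothesis piK : cancel pi pii.
Hypothesis piiK : cancel pii pi.
Hypothesis sgK : cancel sg sgi.
Hypothesis sgiK : cancel sgi sg.
Variables U1 U2 : vec -> vec.
Hypothesis HU : commuting_pair U1 U2.
Hypothesis HU1s : forall f n m k, U1 f (pi ((n, m), k)) = f (pi ((n.+1, m), k)).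
Hypothesis HU2s : forall f n m k, U2 f (pi ((n, m), k)) = f (pi ((n, m.+1), k)).

Theorem shift_pair_universal : universal_commuting_pair U1 U2.
Proof.
split => // S1 S2 [HS1 HS2 HS12].
have [k1 [k1p Tk1]] := op_bound S1 HS1.
have [k2 [k2p Tk2]] := op_bound S2 HS2.
set k0 := k1 + k2.
have k0p : 0 <= k0 by rewrite addr_ge0.
have [G1l2 G1lin] := scaled_op S1 (cst_of k0) HS1.
have [G2l2 G2lin] := scaled_op S2 (cst_of k0) HS2.
case: HS1 => S1l2 S1lin _.
case: HS2 => S2l2 S2lin _.
set c := cst_of k0.
set G1 := fun y => vscale c (S1 y).
set G2 := fun y => vscale c (S2 y).
have Tk1' : forall y, L2 y -> (nsq (S1 y) <= k0%:E * nsq y)%E.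
  move=> y hy; apply: (le_trans (Tk1 y hy)); apply: lee_wpmul2r; first exact: nsq_ge0.
  by rewrite lee_fin /k0 lerDl.
have Tk2' : forall y, L2 y -> (nsq (S2 y) <= k0%:E * nsq y)%E.
  move=> y hy; apply: (le_trans (Tk2 y hy)); apply: lee_wpmul2r; first exact: nsq_ge0.
  by rewrite lee_fin /k0 lerDr.
have Gc1 : forall y, L2 y -> (nsq (G1 y) <= (2^-1)%:E * nsq y)%E := contract k0 S1 k0p S1l2 Tk1'.
have Gc2 : forall y, L2 y -> (nsq (G2 y) <= (2^-1)%:E * nsq y)%E := contract k0 S2 k0p S2l2 Tk2'.
have [P1l2 P1lin] := iter_props G1 G1l2 G1lin.
have [P2l2 P2lin] := iter_props G2 G2l2 G2lin.
pose P := fun (p : nat * nat) x => iter p.1 G1 (iter p.2 G2 x).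
have Pl2 : forall p x, L2 x -> L2 (P p x).
  by move=> [n m] x hx; rewrite /P /=; apply: P1l2; apply: P2l2.
have Plin : forall p, lin_on L2 (P p).
  move=> [n m] a f g hf hg; rewrite /P /= P2lin // P1lin //; exact: P2l2.
have Psum : forall x, L2 x -> (\esum_(p in [set: nat * nat]) nsq (P p x) <= (2 * 2 : R)%:E * nsq x)%E.
  move=> x hx; rewrite esum_prod; last by move=> p; exact: nsq_ge0.
  set b := fine (nsq x).
  have b0 : 0 <= b by exact: fine_nsq_ge0.
  apply: (@le_trans _ _ (\esum_(n in [set: nat]) (((2^-1) ^+ n * (2 * b))%:E))); last first.
    rewrite (nsq_fin hx) -EFinM -/b; apply: (le_trans (geo_sum (2 * b) _)); first by rewrite mulr_ge0.
    by rewrite mulrA.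
  apply: le_esum => n _.
  apply: (@le_trans _ _ (\esum_(m in [set: nat]) (((2^-1) ^+ m * ((2^-1) ^+ n * b))%:E))); last first.
    rewrite mulrCA; apply: geo_sum; rewrite mulr_ge0 // exprn_ge0 // invr_ge0.
  apply: le_esum => m _; rewrite /P /=.
  have A := iter_bound G1 G1l2 Gc1 n (iter m G2 x) (P2l2 m x hx).
  have B := iter_bound G2 G2l2 Gc2 m x hx.
  apply: (le_trans A); rewrite mulrCA EFinM; apply: lee_wpmul2l.
    by rewrite lee_fin exprn_ge0 // invr_ge0.
  by rewrite EFinM -(nsq_fin hx).
have := @core_pack R I (nat * nat)%type K pi pii sg sgi piK piiK sgK sgiK P (0%N, 0%N)
   (fun x => erefl) Pl2 Plin (2 * 2) ltac:(by []) Psum.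
set M := Mset _ _ _ _ _ _ _ _.
set J := s0 _ _ _ _ _ _.
set Ph := Phi _ _ _ _ _ _.
move=> [Mcl [isoJ [isoP [JP [PJ MP]]]]].
have comm : forall m g, L2 g -> S1 (iter m G2 g) = iter m G2 (S1 g).
  elim => [|m IH] g hg //=.
  rewrite -IH //.
  have -> : G2 (iter m G2 g) = vscale c (S2 (iter m G2 g)) by [].
  rewrite (lin_scale I S1 c _ S1lin (S2l2 _ (P2l2 m g hg))).
  by rewrite HS12 //; exact: P2l2.
have key1 : forall g, L2 g -> U1 (Ph g) = vscale c (Ph (S1 g)).
  move=> g hg; apply/funext => i; rewrite -(piiK i); case: (pii i) => [[n m] k].
  rewrite HU1s /Ph /Phi piK /= /P /= -iterS iterSr /vscale /= piK /=.
  have -> : G1 (iter m G2 g) = vscale c (S1 (iter m G2 g)) by [].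
  rewrite comm // (lin_scale I (iter n G1) c _ (P1lin n) (P2l2 m _ (S1l2 g hg))).
  by [].
have key2 : forall g, L2 g -> U2 (Ph g) = vscale c (Ph (S2 g)).
  move=> g hg; apply/funext => i; rewrite -(piiK i); case: (pii i) => [[n m] k].
  rewrite HU2s /Ph /Phi piK /= /P /= -iterS iterSr /vscale /= piK /=.
  have -> : G2 g = vscale c (S2 g) by [].
  have := lin_scale I (P (n, m)) c (S2 g) (Plin (n, m)) (S2l2 g hg).
  by rewrite /P /= => ->.
have Jl2 : forall f, M f -> L2 (J f) by case: isoJ => + _ _ _; apply.
have Mlin : forall h, L2 h -> M (vscale c (Ph h)).
  move=> h hh; rewrite vscaleE; case: Mcl => _ M0 Ml _; apply: Ml => //; exact: MP.
exists c, M, Ph; split => //.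
- exact: cst_of_neq0.
- split => f Mf; rewrite -(PJ f Mf).
  + by rewrite key1; [apply: Mlin; apply: S1l2 | ]; exact: Jl2.
  + by rewrite key2; [apply: Mlin; apply: S2l2 | ]; exact: Jl2.
- by move=> f hf; split; [exact: key1 | exact: key2].
Qed.
End SHIFT2.
Section NEG.
Context {R : realType}.
Local Notation C := (R[i]).
Local Notation vec := (nat * nat -> C).
Local Notation L2 := (@is_l2 R (nat * nat)%type).

Definition delta (q : nat * nat) : vec := fun p => if p == q then 1 else 0.

Lemma nsq_delta q : nsq (delta q) = 1%E.
Proof.
rewrite /nsq.
have -> : (\esum_(p in [set: nat * nat]) (sqmod (delta q p))%:E =
    \esum_(p in [set: nat * nat]) (if p \in [set q] then (sqmod (delta q p))%:E else 0))%E.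
  apply: eq_esum => p _; rewrite /delta; case: ifPn => [/eqP -> | hpq].
    by rewrite ifT //; apply: mem_set.
  rewrite ifF ?sqmod0 //; apply/negbTE; apply/negP => /set_mem /= hpq'.
  by move/eqP: hpq; apply.
rewrite -esum_mkcond esum_set1; last by rewrite lee_fin sqmod_ge0.
by rewrite /delta eqxx /sqmod /= expr1n expr0n /= addr0.
Qed.

Lemma delta_l2 q : L2 (delta q).
Proof. by rewrite /is_l2 -/(nsq _) nsq_delta ltry. Qed.

Lemma zero_bounded : bounded_op (fun _ : vec => vzero R).
Proof.
split.
- by move=> f _; exact: is_l2_zero.
- by move=> a f g _ _; apply/funext => i; rewrite /vlin /vzero mulr0 addr0.
- exists 1 => f _; rewrite /l2norm -/(nsq _) -/(nsq _) nsq_zero /= sqrtr0 mul1r.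
  exact: sqrtr_ge0.
Qed.

Lemma not_ucp (U1 U2 : vec -> vec) :
  (forall f i j, U1 f (i, j) = f (i.+1, j)) -> (forall f i j, U2 f (i, j) = f (i, j.+1)) ->
  ~ universal_commuting_pair U1 U2.
Proof.
move=> h1 h2 [_ H].
have Z : commuting_pair (fun _ : vec => vzero R) (fun _ : vec => vzero R).
  by split; [exact: zero_bounded | exact: zero_bounded | ].
have [c [M [V [c0 _ _ [Vl Vlin Vsurj [k1 [k2 Vk]]] HV]]]] := H _ _ Z.
have V0 : V (vzero R) = vzero R := lin_zero _ V Vlin.
have supp : forall f, L2 f -> forall p, p != (0%N, 0%N) -> V f p = 0.
  move=> f hf [i j]; case: i => [|i].
    case: j => [|j] // _.
    have := congr1 (fun F => F (0%N, j)) (HV f hf).2.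
    by rewrite /= h2 => ->; rewrite V0 /vscale /vzero mulr0.
  move=> _; have := congr1 (fun F => F (i, j)) (HV f hf).1.
  by rewrite /= h1 => ->; rewrite V0 /vscale /vzero mulr0.
have inj : forall f, L2 f -> V f = vzero R -> f = vzero R.
  move=> f hf hV; have [_ h] := Vk f hf; move: h; rewrite hV.
  rewrite {2}/l2norm -/(nsq _) nsq_zero /= sqrtr0 mulr0 /l2norm -/(nsq _) => h.
  apply: nsq_eq0; rewrite (nsq_fin hf).
  have h0 : Num.sqrt (fine (nsq f)) = 0 by apply/eqP; rewrite eq_le h sqrtr_ge0.
  move/eqP: h0; rewrite sqrtr_eq0 => h0.
  have h3 := fine_nsq_ge0 f.
  by congr (_%:E); apply/eqP; rewrite eq_le h0 h3.
set d0 := delta (0%N, 0%N).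
set d1 := delta (1%N, 0%N).
have hd0 : L2 d0 by exact: delta_l2.
have hd1 : L2 d1 by exact: delta_l2.
set al := V d0 (0%N, 0%N).
set be := V d1 (0%N, 0%N).
set g := vlin (- al) d1 (vscale be d0).
have hg : L2 g by apply: is_l2_vlin => //; exact: is_l2_vscale.
have Vg : V g = vzero R.
  rewrite /g Vlin //; last exact: is_l2_vscale.
  rewrite (lin_scale _ V be d0 Vlin hd0).
  apply/funext => p; rewrite /vlin /vscale /vzero.
  case: (eqVneq p (0%N, 0%N)) => [-> | hp].
    by rewrite -/al -/be mulNr mulrC addNr.
  by rewrite !supp // !mulr0 addr0.
have g0 := inj g hg Vg.
have e0 := congr1 (fun F => F (0%N, 0%N)) g0.
have e1 := congr1 (fun F => F (1%N, 0%N)) g0.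
move: e0 e1; rewrite /g /vlin /vscale /vzero /d0 /d1 /delta /=.
rewrite mulr0 add0r mulr1 mulr1 mulr0 addr0 => hbe /eqP.
rewrite oppr_eq0 => /eqP hal.
have : V d0 = vzero R.
  apply/funext => p; case: (eqVneq p (0%N, 0%N)) => [-> | hp]; first by rewrite -/al hal.
  exact: supp.
move/(inj d0 hd0) => /(congr1 (fun F => F (0%N, 0%N))).
rewrite /d0 /delta eqxx /vzero => /eqP; by rewrite oner_eq0.
Qed.
End NEG.

Section MAIN.
Context {R : realType}.
Local Notation C := (R[i]).

Lemma comp_bounded {I : choiceType} (e : I -> I) (U : (I -> C) -> I -> C) :
  injective e -> (forall f i, U f i = f (e i)) -> bounded_op U.
Proof.
move=> ie HUe.
have Ue : forall f, U f = fun i => f (e i) by move=> f; apply/funext => i; exact: HUe.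
have nb : forall f, (nsq (U f) <= nsq f)%E.
  by move=> f; rewrite Ue /nsq; exact: (@esum_inj R _ _ e (fun j => (sqmod (f j))%:E)).
have Ul2 : forall f, is_l2 f -> is_l2 (U f).
  by move=> f hf; rewrite /is_l2 -/(nsq _); apply: le_lt_trans (nb f) hf.
split => //.
- by move=> a f g _ _; rewrite !Ue.
- exists 1 => f hf.
  have := @l2norm_le R I f (U f) 1 hf (Ul2 f hf) ler01.
  by rewrite sqrtr1; apply; rewrite mul1e.
Qed.

Lemma LB (f : nat * nat -> C) p : Lmul (@bshift R) f p = f (p.1.+1, p.2).
Proof. by []. Qed.
Lemma RB (f : nat * nat -> C) p : Radj (@bshift R) f p = f (p.1, p.2.+1).
Proof. by case: p => a b; rewrite /Radj /adjmx /Lmul /bshift /= cconjK. Qed.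
Lemma LBi (f : (nat * nat) * (nat * nat) -> C) p :
  Lmul (@bshift_inf R) f p = f ((p.1.1.+1, p.1.2), p.2).
Proof. by []. Qed.
Lemma RBi (f : (nat * nat) * (nat * nat) -> C) p :
  Radj (@bshift_inf R) f p = f (p.1, (p.2.1.+1, p.2.2)).
Proof. by case: p => a [b c]; rewrite /Radj /adjmx /Lmul /bshift_inf /= cconjK. Qed.

Lemma bLB : bounded_op (Lmul (@bshift R)).
Proof.
apply: (comp_bounded (fun p : nat * nat => (p.1.+1, p.2))) => //.
by move=> [a b] [c d] /= [-> ->].
Qed.
Lemma bRB : bounded_op (Radj (@bshift R)).
Proof.
apply: (comp_bounded (fun p : nat * nat => (p.1, p.2.+1))); last exact: RB.
by move=> [a b] [c d] /= [-> ->].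
Qed.
Lemma bLBi : bounded_op (Lmul (@bshift_inf R)).
Proof.
apply: (comp_bounded (fun p : (nat * nat) * (nat * nat) => ((p.1.1.+1, p.1.2), p.2))) => //.
by move=> [[a b] q] [[c d] q'] /= [-> -> ->].
Qed.
Lemma bRBi : bounded_op (Radj (@bshift_inf R)).
Proof.
apply: (comp_bounded (fun p : (nat * nat) * (nat * nat) => (p.1, (p.2.1.+1, p.2.2)))); last exact: RBi.
by move=> [q [a b]] [q' [c d]] /= [-> -> ->].
Qed.

Lemma toK : cancel Cantor.to_nat Cantor.of_nat.
Proof. exact: Cantor.cancel_of_to. Qed.
Lemma ofK : cancel Cantor.of_nat Cantor.to_nat.
Proof. exact: Cantor.cancel_to_of. Qed.

Theorem theorem4p3_aux :
  (universal (Lmul (@bshift R)) /\ universal (Radj (@bshift R)) /\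
   universal (Lmul (@bshift_inf R)) /\ universal (Radj (@bshift_inf R))) /\
  (commuting_pair (Lmul (@bshift R)) (Radj (@bshift R)) /\
   ~ universal_commuting_pair (Lmul (@bshift R)) (Radj (@bshift R))) /\
  universal_commuting_pair (Lmul (@bshift_inf R)) (Radj (@bshift_inf R)).
Proof.
split; [split; [|split; [|split]] | split; [split | ]].
- apply: (shift_universal _ _ (fun p : nat * nat => p) (fun p : nat * nat => p)
    Cantor.of_nat Cantor.to_nat (fun _ => erefl) (fun _ => erefl) ofK toK) => //.
  exact: bLB.
- apply: (shift_universal _ _ (fun p : nat * nat => (p.2, p.1)) (fun p : nat * nat => (p.2, p.1))
    Cantor.of_nat Cantor.to_nat _ _ ofK toK); try by case.
  + exact: bRB.
  + by move=> f n k; rewrite RB.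
- apply: (shift_universal _ _ (fun p : nat * (nat * (nat * nat)) => ((p.1, p.2.1), p.2.2))
    (fun i : (nat * nat) * (nat * nat) => (i.1.1, (i.1.2, i.2)))
    (fun k : nat * (nat * nat) => (Cantor.of_nat k.1, k.2))
    (fun i : (nat * nat) * (nat * nat) => (Cantor.to_nat i.1, i.2))); try by [case => ? [? ?]| case => [[? ?] ?]].
  + by case => a b /=; rewrite ofK.
  + by case => a b /=; rewrite toK.
  + exact: bLBi.
  + by [].
- apply: (shift_universal _ _ (fun p : nat * ((nat * nat) * nat) => (p.2.1, (p.1, p.2.2)))
    (fun i : (nat * nat) * (nat * nat) => (i.2.1, (i.1, i.2.2)))
    (fun k : (nat * nat) * nat => (k.1, Cantor.of_nat k.2))
    (fun i : (nat * nat) * (nat * nat) => (i.1, Cantor.to_nat i.2))); try by [case => ? [? ?]| case => [? [? ?]]].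
  + by case => a b /=; rewrite ofK.
  + by case => a b /=; rewrite toK.
  + exact: bRBi.
  + by move=> f n k; rewrite RBi.
- split; [exact: bLB | exact: bRB | ].
  by move=> f _; apply/funext => -[i j]; rewrite !LB !RB /= !LB.
- by apply: not_ucp; [move=> f i j; exact: (LB f (i, j)) | move=> f i j; exact: (RB f (i, j))].
- apply: (shift_pair_universal _ _
    (fun p : (nat * nat) * (nat * nat) => ((p.1.1, p.2.1), (p.1.2, p.2.2)))
    (fun i : (nat * nat) * (nat * nat) => ((i.1.1, i.2.1), (i.1.2, i.2.2)))
    (fun k : nat * nat => (Cantor.of_nat k.1, Cantor.of_nat k.2))
    (fun i : (nat * nat) * (nat * nat) => (Cantor.to_nat i.1, Cantor.to_nat i.2)));
    try by case => [[? ?] [? ?]].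
  + by case => a b /=; rewrite !ofK.
  + by case => a b /=; rewrite !toK.
  + split; [exact: bLBi | exact: bRBi | ].
    by move=> f _; apply/funext => -[[a b] [c d]]; rewrite !LBi !RBi /= !LBi.
  all: by move=> f n m k; rewrite ?RBi.
Qed.
End MAIN.

Theorem theorem4p3 (R : realType) :
  (universal (Lmul (@bshift R)) /\ universal (Radj (@bshift R)) /\
   universal (Lmul (@bshift_inf R)) /\ universal (Radj (@bshift_inf R))) /\
  (commuting_pair (Lmul (@bshift R)) (Radj (@bshift R)) /\
   ~ universal_commuting_pair (Lmul (@bshift R)) (Radj (@bshift R))) /\
  universal_commuting_pair (Lmul (@bshift_inf R)) (Radj (@bshift_inf R)).
Proof. exact: (@theorem4p3_aux R). Qed.
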